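(* Let $\beta>0$ and let $V\in\mathbb R^{d\times d}$ be real symmetric with orthonormal eigenbasis $(e_k)$ and eigenvalues $(\lambda_k)$. Consider on $(\mathbb S^{d-1})^n$ the system \[ \dot x_i=F_i(x):=P^\perp_{x_i}\Big(\sum_{j=1}^n K_{ij}(x)Vx_j\Big),\qquad K_{ij}(x)=\frac{e^{\beta\langle x_i,Vx_j\rangle}}{\sum_{\ell=1}^n e^{\beta\langle x_i,Vx_\ell\rangle}}. \] Fix $p\in[d]$ and signs $s_1,\dots,s_n\in\{\pm1\}$, and let $x_i^*=s_ie_p$ (a pure-mode equilibrium). For tangent perturbations $x_i=(x_i^*+y_i)/\|x_i^*+y_i\|$ with $\langle y_i,x_i^*\rangle=0$, one has \[ F_i(x)=-\gamma_iy_i+\sum_{j=1}^nK_{ij}^*Vy_j+O(|y|^2),\qquad |y|:=\max_m\|y_m\|, \] so that the linearized tangent system is \[ \dot y_i=-\gamma_iy_i+\sum_{j=1}^nK_{ij}^*Vy_j,\quad i\in[n], \] where $K_{ij}^*:=K_{ij}(x^* )$ and $\gamma_i:=\lambda_ps_i\sum_{j=1}^nK_{ij}^*s_j$.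
   Context: $P^\perp_xy=y-\langle x,y\rangle x$ denotes the orthogonal projection onto $T_x\mathbb S^{d-1}$. *)

(* Defs.v *)
From HB Require Import structures.
From mathcomp Require Import all_boot all_order all_algebra.
From mathcomp Require Import all_classical all_reals all_analysis.
Set Implicit Arguments. Unset Strict Implicit. Unset Printing Implicit Defensive.
Import Order.TTheory GRing.Theory Num.Theory.
Local Open Scope ring_scope.

Section Defs.
Variables (R : realType) (d n : nat).

Definition dotv (u v : 'cV[R]_d) : R := \sum_(k < d) u k 0 * v k 0.
Definition vnorm (u : 'cV[R]_d) : R := Num.sqrt (dotv u u).

Definition Pperp (x y : 'cV[R]_d) : 'cV[R]_d := y - dotv x y *: x.

Definition Katt (beta : R) (V : 'M[R]_d) (x : 'I_n -> 'cV[R]_d) (i j : 'I_n) : R :=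
  expR (beta * dotv (x i) (V *m x j)) /
  \sum_(l < n) expR (beta * dotv (x i) (V *m x l)).

Definition Fvec (beta : R) (V : 'M[R]_d) (x : 'I_n -> 'cV[R]_d) (i : 'I_n) : 'cV[R]_d :=
  Pperp (x i) (\sum_(j < n) Katt beta V x i j *: (V *m x j)).

Definition ymax (y : 'I_n -> 'cV[R]_d) : R := \big[Num.max/0]_(m < n) vnorm (y m).

Definition normalize (u : 'cV[R]_d) : 'cV[R]_d := (vnorm u)^-1 *: u.
End Defs.

(* Main.v *)
Require Import Defs.
From HB Require Import structures.
From mathcomp Require Import all_boot all_order all_algebra.
From mathcomp Require Import all_classical all_reals all_analysis.
From mathcomp Require Import ring lra.
Import Order.TTheory GRing.Theory Num.Theory.
Local Open Scope ring_scope.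
Set Implicit Arguments. Unset Strict Implicit.


Section Vec.
Variables (R : realType) (d : nat).
Implicit Types u v w : 'cV[R]_d.

Lemma dotvE u v : dotv u v = (u^T *m v) 0 0.
Proof. by rewrite /dotv mxE; apply: eq_bigr => k _; rewrite mxE. Qed.

Lemma dotvC u v : dotv u v = dotv v u.
Proof. by rewrite /dotv; apply: eq_bigr => k _; rewrite mulrC. Qed.

Lemma dotvDr u v w : dotv u (v + w) = dotv u v + dotv u w.
Proof. by rewrite /dotv -big_split; apply: eq_bigr => k _; rewrite mxE mulrDr. Qed.

Lemma dotvDl u v w : dotv (v + w) u = dotv v u + dotv w u.
Proof. by rewrite dotvC dotvDr !(dotvC u). Qed.

Lemma dotvZr a u v : dotv u (a *: v) = a * dotv u v.
Proof. by rewrite /dotv mulr_sumr; apply: eq_bigr => k _; rewrite mxE; ring. Qed.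

Lemma dotvZl a u v : dotv (a *: v) u = a * dotv v u.
Proof. by rewrite dotvC dotvZr dotvC. Qed.

Lemma dotvNr u v : dotv u (- v) = - dotv u v.
Proof. by rewrite -scaleN1r dotvZr mulN1r. Qed.

Lemma dotvNl u v : dotv (- v) u = - dotv v u.
Proof. by rewrite dotvC dotvNr dotvC. Qed.

Lemma dotvBr u v w : dotv u (v - w) = dotv u v - dotv u w.
Proof. by rewrite dotvDr dotvNr. Qed.

Lemma dotvBl u v w : dotv (v - w) u = dotv v u - dotv w u.
Proof. by rewrite dotvDl dotvNl. Qed.

Lemma dotv0r u : dotv u 0 = 0.
Proof. by rewrite /dotv big1 // => k _; rewrite mxE mulr0. Qed.

Lemma dotv_sumr (I : finType) u (F : I -> 'cV[R]_d) :
  dotv u (\sum_(j : I) F j) = \sum_(j : I) dotv u (F j).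
Proof.
elim/big_rec2: _ => [|j x y _ h]; first exact: dotv0r.
by rewrite dotvDr h.
Qed.

Lemma dotv_mulmx (A : 'M[R]_d) u v : dotv u (A *m v) = dotv (A^T *m u) v.
Proof. by rewrite !dotvE trmx_mul trmxK mulmxA. Qed.

Lemma dotv_ge0 u : 0 <= dotv u u.
Proof. by apply: sumr_ge0 => k _; rewrite -expr2 sqr_ge0. Qed.

Lemma vnorm_ge0 u : 0 <= vnorm u.
Proof. exact: sqrtr_ge0. Qed.

Lemma vnorm_sq u : vnorm u ^+ 2 = dotv u u.
Proof. by rewrite /vnorm sqr_sqrtr // dotv_ge0. Qed.

Lemma vnorm0_dot u v : vnorm u = 0 -> dotv u v = 0.
Proof.
move=> h; have h2 : dotv u u = 0 by rewrite -vnorm_sq h expr0n.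
have hs : \sum_(k < d) u k 0 ^+ 2 = 0.
  by rewrite -[RHS]h2 /dotv; apply: eq_bigr => k _; rewrite expr2.
rewrite /dotv big1 // => k _.
have : u k 0 ^+ 2 = 0.
  by apply: (psumr_eq0P _ hs) => // *; exact: sqr_ge0.
by move/eqP; rewrite sqrf_eq0 => /eqP ->; rewrite mul0r.
Qed.

Lemma CS u v : `|dotv u v| <= vnorm u * vnorm v.
Proof.
set a := vnorm u; set b := vnorm v.
have a0 : 0 <= a by exact: vnorm_ge0.
have b0 : 0 <= b by exact: vnorm_ge0.
have [a00|apos] := eqVneq a 0.
  by rewrite vnorm0_dot // normr0 a00 mul0r.
have [b00|bpos] := eqVneq b 0.
  by rewrite dotvC vnorm0_dot // normr0 b00 mulr0.
have ha : dotv u u = a ^+ 2 by rewrite vnorm_sq.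
have hb : dotv v v = b ^+ 2 by rewrite vnorm_sq.
have h1 := dotv_ge0 (b *: u - a *: v).
have h2 := dotv_ge0 (b *: u + a *: v).
rewrite !(dotvDl, dotvDr, dotvNl, dotvNr, dotvZl, dotvZr) ha hb (dotvC v u) in h1 h2.
have ab : 0 < a * b by rewrite mulr_gt0 // lt0r ?apos ?bpos.
rewrite ler_norml; apply/andP; split; nra.
Qed.

Lemma vnormD u v : vnorm (u + v) <= vnorm u + vnorm v.
Proof.
rewrite /vnorm -(ger0_norm (addr_ge0 (sqrtr_ge0 (dotv u u)) (sqrtr_ge0 (dotv v v)))).
rewrite -sqrtr_sqr ler_sqrt ?sqr_ge0 //.
have := CS u v; rewrite /vnorm => h.
have := ler_norm (dotv u v) => h'.
rewrite !(dotvDl, dotvDr) (dotvC v u) sqrrD !sqr_sqrtr ?dotv_ge0 //.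
lra.
Qed.

Lemma vnormZ a u : vnorm (a *: u) = `|a| * vnorm u.
Proof.
by rewrite /vnorm dotvZl dotvZr mulrA -expr2 sqrtrM ?sqr_ge0 // sqrtr_sqr.
Qed.

Lemma vnormN u : vnorm (- u) = vnorm u.
Proof. by rewrite -scaleN1r vnormZ normrN normr1 mul1r. Qed.

Lemma vnorm0 : vnorm (0 : 'cV[R]_d) = 0.
Proof. by rewrite /vnorm dotv0r sqrtr0. Qed.

Lemma vnorm_sum (I : finType) (F : I -> 'cV[R]_d) :
  vnorm (\sum_(j : I) F j) <= \sum_(j : I) vnorm (F j).
Proof.
apply: (big_ind2 (fun x y => vnorm x <= y)) => //.
  by rewrite vnorm0.
by move=> x1 x2 y1 y2 h1 h2; apply: le_trans (vnormD _ _) _; exact: lerD.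
Qed.

Lemma vnorm_coord u : vnorm u <= \sum_(k < d) `|u k 0|.
Proof.
rewrite /vnorm -(ger0_norm (sumr_ge0 _ (fun k _ => normr_ge0 (u k 0)))).
rewrite -sqrtr_sqr ler_sqrt ?sqr_ge0 //.
have : (0 <= \sum_(k < d) `|u k 0|) /\ dotv u u <= (\sum_(k < d) `|u k 0|) ^+ 2.
  rewrite /dotv.
  apply: (big_ind2 (fun x y => 0 <= y /\ x <= y ^+ 2)).
  - by rewrite expr0n /=.
  - by move=> x1 x2 y1 y2 [h1 h1'] [h2 h2']; split; nra.
  - by move=> k _; split; rewrite ?normr_ge0 // real_normK ?num_real // expr2.
by case.
Qed.

Definition mxbound (A : 'M[R]_d) := \sum_(k < d) vnorm (row k A)^T.

Lemma mxbound_ge0 A : 0 <= mxbound A.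
Proof. by apply: sumr_ge0 => *; exact: vnorm_ge0. Qed.

Lemma vnorm_mulmx (A : 'M[R]_d) u : vnorm (A *m u) <= mxbound A * vnorm u.
Proof.
apply: le_trans (vnorm_coord _) _.
rewrite /mxbound mulr_suml; apply: ler_sum => k _.
have -> : (A *m u) k 0 = dotv (row k A)^T u.
  by rewrite /dotv mxE; apply: eq_bigr => l _; rewrite !mxE.
exact: CS.
Qed.

End Vec.


Section O.
Variables (R : realType) (d : nat) (T : Type) (P : T -> Prop) (r : T -> R).

Definition Ok k (f : T -> R) :=
  exists c, 0 <= c /\ forall t, P t -> `|f t| <= c * r t ^+ k.
Definition Okv k (f : T -> 'cV[R]_d) :=
  exists c, 0 <= c /\ forall t, P t -> vnorm (f t) <= c * r t ^+ k.

Hypothesis Hr : forall t, P t -> 0 <= r t <= 1.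

Lemma rk_ge0 k t : P t -> 0 <= r t ^+ k.
Proof. by move=> /Hr /andP[h _]; exact: exprn_ge0. Qed.

Lemma Ok_intro k f c : (forall t, P t -> `|f t| <= c * r t ^+ k) -> Ok k f.
Proof.
move=> h; exists `|c|; split => // t Pt; apply: le_trans (h t Pt) _.
by rewrite ler_wpM2r ?rk_ge0 ?ler_norm.
Qed.

Lemma Okv_intro k f c : (forall t, P t -> vnorm (f t) <= c * r t ^+ k) -> Okv k f.
Proof.
move=> h; exists `|c|; split => // t Pt; apply: le_trans (h t Pt) _.
by rewrite ler_wpM2r ?rk_ge0 ?ler_norm.
Qed.

Lemma Ok_ext k f g : (forall t, P t -> f t = g t) -> Ok k f -> Ok k g.
Proof. by move=> e [c [c0 h]]; exists c; split => // t Pt; rewrite -(e t Pt); auto. Qed.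

Lemma Okv_ext k f g : (forall t, P t -> f t = g t) -> Okv k f -> Okv k g.
Proof. by move=> e [c [c0 h]]; exists c; split => // t Pt; rewrite -(e t Pt); auto. Qed.

Lemma rk_weak k k' t : (k <= k')%N -> P t -> r t ^+ k' <= r t ^+ k.
Proof. by move=> kk /Hr /andP[h1 h2]; exact: ler_wiXn2l. Qed.

Lemma Ok_weak k k' f : (k <= k')%N -> Ok k' f -> Ok k f.
Proof.
move=> kk [c [c0 h]]; exists c; split => // t Pt; apply: le_trans (h t Pt) _.
by rewrite ler_wpM2l // rk_weak.
Qed.

Lemma Okv_weak k k' f : (k <= k')%N -> Okv k' f -> Okv k f.
Proof.
move=> kk [c [c0 h]]; exists c; split => // t Pt; apply: le_trans (h t Pt) _.
by rewrite ler_wpM2l // rk_weak.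
Qed.

Lemma Ok_cst a : Ok 0 (fun _ => a).
Proof. by apply: (@Ok_intro _ _ (`|a|)) => t _; rewrite expr0 mulr1. Qed.

Lemma Okv_cst u : Okv 0 (fun _ => u).
Proof. by apply: (@Okv_intro _ _ (vnorm u)) => t _; rewrite expr0 mulr1. Qed.

Lemma Ok_add k f g : Ok k f -> Ok k g -> Ok k (fun t => f t + g t).
Proof.
move=> [c1 [_ h1]] [c2 [_ h2]]; apply: (@Ok_intro _ _ (c1 + c2)) => t Pt.
by apply: le_trans (ler_normD _ _) _; rewrite mulrDl; apply: lerD; auto.
Qed.

Lemma Okv_add k f g : Okv k f -> Okv k g -> Okv k (fun t => f t + g t).
Proof.
move=> [c1 [_ h1]] [c2 [_ h2]]; apply: (@Okv_intro _ _ (c1 + c2)) => t Pt.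
by apply: le_trans (vnormD _ _) _; rewrite mulrDl; apply: lerD; auto.
Qed.

Lemma Ok_opp k f : Ok k f -> Ok k (fun t => - f t).
Proof. by move=> [c [c0 h]]; exists c; split => // t Pt; rewrite normrN; auto. Qed.

Lemma Okv_opp k f : Okv k f -> Okv k (fun t => - f t).
Proof. by move=> [c [c0 h]]; exists c; split => // t Pt; rewrite vnormN; auto. Qed.

Lemma Ok_sub k f g : Ok k f -> Ok k g -> Ok k (fun t => f t - g t).
Proof. by move=> h1 h2; apply: Ok_add => //; exact: Ok_opp. Qed.

Lemma Okv_sub k f g : Okv k f -> Okv k g -> Okv k (fun t => f t - g t).
Proof. by move=> h1 h2; apply: Okv_add => //; exact: Okv_opp. Qed.

Lemma Ok_mul a b f g : Ok a f -> Ok b g -> Ok (a + b) (fun t => f t * g t).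
Proof.
move=> [c1 [c10 h1]] [c2 [c20 h2]]; apply: (@Ok_intro _ _ (c1 * c2)) => t Pt.
rewrite normrM exprD mulrACA; apply: ler_pM => //; auto.
Qed.

Lemma Okv_scale a b g f : Ok a g -> Okv b f -> Okv (a + b) (fun t => g t *: f t).
Proof.
move=> [c1 [c10 h1]] [c2 [c20 h2]]; apply: (@Okv_intro _ _ (c1 * c2)) => t Pt.
rewrite vnormZ exprD mulrACA; apply: ler_pM => //; auto; exact: vnorm_ge0.
Qed.

Lemma Okv_mulmx (A : 'M[R]_d) k f : Okv k f -> Okv k (fun t => A *m f t).
Proof.
move=> [c [c0 h]]; apply: (@Okv_intro _ _ (mxbound A * c)) => t Pt.
apply: le_trans (vnorm_mulmx _ _) _; rewrite -mulrA.
by apply: ler_wpM2l; [exact: mxbound_ge0 | auto].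
Qed.

Lemma Ok_dot a b f g : Okv a f -> Okv b g -> Ok (a + b) (fun t => dotv (f t) (g t)).
Proof.
move=> [c1 [c10 h1]] [c2 [c20 h2]]; apply: (@Ok_intro _ _ (c1 * c2)) => t Pt.
apply: le_trans (CS _ _) _.
rewrite exprD mulrACA; apply: ler_pM => //; auto; exact: vnorm_ge0.
Qed.

Lemma Ok_r : Ok 1 r.
Proof.
apply: (@Ok_intro _ _ (1)) => t Pt; rewrite expr1 mul1r ger0_norm //.
by case/andP: (Hr Pt).
Qed.

Lemma Ok_bound f : Ok 0 f -> exists B, 0 <= B /\ forall t, P t -> `|f t| <= B.
Proof. by move=> [c [c0 h]]; exists c; split => // t Pt; rewrite -[c]mulr1 -(expr0 (r t)); auto. Qed.

Lemma Ok_fin (F : finType) (h : F -> R) (g : T -> F) : Ok 0 (fun t => h (g t)).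
Proof.
apply: (@Ok_intro _ _ (\sum_(x : F) `|h x|)) => t _; rewrite expr0 mulr1.
rewrite (bigD1 (g t)) //= lerDl; apply: sumr_ge0 => *; exact: normr_ge0.
Qed.

Lemma Okv_fin (F : finType) (h : F -> 'cV[R]_d) (g : T -> F) : Okv 0 (fun t => h (g t)).
Proof.
apply: (@Okv_intro _ _ (\sum_(x : F) vnorm (h x))) => t _; rewrite expr0 mulr1.
rewrite (bigD1 (g t)) //= lerDl; apply: sumr_ge0 => *; exact: vnorm_ge0.
Qed.

Lemma expR_sub1 (h : R) : `|expR h - 1| <= `|h| * expR `|h|.
Proof.
have e1 := expR_ge1Dx h.
have e2 := expR_ge1Dx (- h); rewrite expRN in e2.
have ep := expR_gt0 h.
have einv : expR h * (expR h)^-1 = 1 by rewrite mulfV // gt_eqF.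
have e3 : expR h - 1 <= h * expR h by nra.
have E1 : 1 <= expR `|h| by rewrite -expR0 ler_expR normr_ge0.
have E2 : expR h <= expR `|h| by rewrite ler_expR ler_norm.
have hn := ler_norm h; have hn' : - h <= `|h| by rewrite -normrN ler_norm.
have hn0 := normr_ge0 h.
rewrite ler_norml; apply/andP; split.
  nra.
by apply: le_trans e3 _; nra.
Qed.

Lemma Ok_exp k f g : Ok 0 g -> Ok k (fun t => f t - g t) ->
  Ok k (fun t => expR (f t) - expR (g t)).
Proof.
move=> /Ok_bound [B [B0 hB]] [c [c0 h]].
apply: (@Ok_intro _ _ (expR B * (c * expR c))) => t Pt.
have -> : expR (f t) - expR (g t) = expR (g t) * (expR (f t - g t) - 1).
  by rewrite mulrBr mulr1 -expRD addrCA subrr addr0.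
rewrite normrM (ger0_norm (ltW (expR_gt0 _))).
rewrite -mulrA; apply: ler_pM.
- exact: ltW (expR_gt0 _).
- exact: normr_ge0.
- by rewrite ler_expR; apply: le_trans (ler_norm _) (hB t Pt).
apply: le_trans (expR_sub1 _) _.
have hc := h t Pt.
have r1 : r t ^+ k <= 1 by case/andP: (Hr Pt) => *; exact: exprn_ile1.
have hc' : `|f t - g t| <= c.
  by apply: le_trans hc _; rewrite ler_piMr.
rewrite mulrAC; apply: ler_pM => //; try exact: normr_ge0; try (apply: ltW; exact: expR_gt0).
by rewrite ler_expR.
Qed.

End O.
Arguments Ok {R T} P r k f.
Arguments Okv {R d T} P r k f.

Lemma Ok_sum (R : realType) (T : Type) (P : T -> Prop) (r : T -> R) n k
  (f : T * 'I_n -> R) :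
  Ok (fun t => P t.1) (fun t => r t.1) k f -> Ok P r k (fun t => \sum_(j < n) f (t, j)).
Proof.
move=> [c [c0 h]]; exists (c *+ n); split; first exact: mulrn_wge0.
move=> t Pt; apply: le_trans (ler_norm_sum _ _ _) _.
apply: le_trans (ler_sum (G := fun _ => c * r t ^+ k) _ _) _.
  by move=> j _; exact: (h (t, j)).
by rewrite sumr_const card_ord mulrnAl.
Qed.

Lemma Okv_sum (R : realType) d (T : Type) (P : T -> Prop) (r : T -> R) n k
  (f : T * 'I_n -> 'cV[R]_d) :
  Okv (fun t => P t.1) (fun t => r t.1) k f -> Okv P r k (fun t => \sum_(j < n) f (t, j)).
Proof.
move=> [c [c0 h]]; exists (c *+ n); split; first exact: mulrn_wge0.
move=> t Pt; apply: le_trans (vnorm_sum _) _.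
apply: le_trans (ler_sum (G := fun _ => c * r t ^+ k) _ _) _.
  by move=> j _; exact: (h (t, j)).
by rewrite sumr_const card_ord mulrnAl.
Qed.

Lemma Ok_comp (R : realType) (T T' : Type) (P : T -> Prop) (r : T -> R) k
  (f : T -> R) (phi : T' -> T) :
  Ok P r k f -> Ok (fun t => P (phi t)) (fun t => r (phi t)) k (fun t => f (phi t)).
Proof. by move=> [c [c0 h]]; exists c; split => // t; exact: h. Qed.


Section Main.
Variables (R : realType) (d n : nat) (beta : R) (V E : 'M[R]_d) (lam : 'I_d -> R)
  (p : 'I_d) (s : 'I_n -> R).
Hypotheses (hV : V^T = V) (hE : E^T *m E = 1%:M)
  (heig : forall k : 'I_d, V *m col k E = lam k *: col k E)
  (hs : forall i, s i = 1 \/ s i = -1) (hb : 0 < beta).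

Definition e := col p E.
Definition xs i := s i *: e.
Definition adm (y : 'I_n -> 'cV[R]_d) :=
  (forall i, dotv (y i) (xs i) = 0) /\ ymax y <= 1.
Definition xx (y : 'I_n -> 'cV[R]_d) m := normalize (xs m + y m).
Definition aa (y : 'I_n -> 'cV[R]_d) m := (vnorm (xs m + y m))^-1.

Lemma ss i : s i * s i = 1.
Proof. by case: (hs i) => ->; rewrite ?mulr1 ?mulrNN ?mulr1. Qed.

Lemma ee : dotv e e = 1.
Proof.
have := congr1 (fun M : 'M[R]_d => M p p) hE; rewrite !mxE eqxx mulr1n => <-.
by rewrite /dotv; apply: eq_bigr => k _; rewrite !mxE.
Qed.

Lemma Ve : V *m e = lam p *: e.
Proof. exact: heig. Qed.

Lemma eV u : dotv e (V *m u) = lam p * dotv e u.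
Proof. by rewrite dotv_mulmx hV Ve dotvZl. Qed.

Lemma ye y m : adm y -> dotv (y m) e = 0.
Proof.
case=> h _; have := h m; rewrite /xs dotvZr => /eqP.
rewrite mulf_eq0 => /orP[/eqP hs0|/eqP //].
by case: (hs m) => hm; rewrite hm in hs0; lra.
Qed.

Lemma ey y m : adm y -> dotv e (y m) = 0.
Proof. by move=> h; rewrite dotvC ye. Qed.

Lemma ymax_ge0 (y : 'I_n -> 'cV[R]_d) : 0 <= ymax y.
Proof.
rewrite /ymax; elim/big_ind: _ => //.
  by move=> a b ha hb'; rewrite le_max ha.
by move=> *; exact: vnorm_ge0.
Qed.

Lemma ymax_ge (y : 'I_n -> 'cV[R]_d) m : vnorm (y m) <= ymax y.
Proof. exact: le_bigmax. Qed.

Lemma nsq y m : adm y -> vnorm (xs m + y m) ^+ 2 = 1 + vnorm (y m) ^+ 2.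
Proof.
move=> h; rewrite !vnorm_sq /xs !(dotvDl, dotvDr, dotvZl, dotvZr) ee ye // ey //.
by rewrite !mulr0 !addr0 mulr1 ss add0r.
Qed.

Lemma aa_bound y m : adm y ->
  0 < aa y m <= 1 /\ `|aa y m - 1| <= ymax y ^+ 2.
Proof.
move=> h; have hq := nsq m h.
set N := vnorm (xs m + y m) in hq *.
set q := vnorm (y m) in hq.
have q0 : 0 <= q by exact: vnorm_ge0.
have qr : q <= ymax y by exact: ymax_ge.
have N0 : 0 <= N by exact: vnorm_ge0.
have N1 : 1 <= N.
  have : 1 <= N ^+ 2 by rewrite hq lerDl sqr_ge0.
  by apply: contraLR; rewrite -!ltNge => hN; rewrite expr2; nra.
have Npos : N != 0 by rewrite gt_eqF // (lt_le_trans ltr01 N1).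
have NI : N * N^-1 = 1 by rewrite mulfV.
rewrite /aa -/N; set I := N^-1 in NI *.
have I0 : 0 < I by rewrite invr_gt0 (lt_le_trans ltr01 N1).
have qq : q ^+ 2 <= ymax y ^+ 2 by rewrite ler_sqr ?nnegrE ?ymax_ge0.
split; first by apply/andP; split => //; nra.
rewrite ler_norml; apply/andP; split; nra.
Qed.


Lemma Vxs j : V *m xs j = (s j * lam p) *: e.
Proof. by rewrite /xs -scalemxAr Ve scalerA. Qed.

Lemma Vxx y j : V *m xx y j = aa y j *: ((s j * lam p) *: e + V *m y j).
Proof. by rewrite /xx /normalize -scalemxAr mulmxDr Vxs. Qed.

Definition zz y i j := dotv (xx y i) (V *m xx y j).
Definition zs i j := lam p * s i * s j.

Lemma zz_eq y i j : adm y ->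
  zz y i j = aa y i * aa y j * (zs i j + dotv (y i) (V *m y j)).
Proof.
move=> h; rewrite /zz Vxx {1}/xx /normalize -/(aa y i) /xs /zs.
rewrite !(dotvDl, dotvDr, dotvZl, dotvZr) ee eV ey // ye //.
ring.
Qed.

Lemma zs_eq i j : dotv (xs i) (V *m xs j) = zs i j.
Proof. by rewrite Vxs /xs dotvZl dotvZr ee /zs; ring. Qed.

Definition Pd T (py : T -> 'I_n -> 'cV[R]_d) t := adm (py t).
Definition rd T (py : T -> 'I_n -> 'cV[R]_d) t := ymax (py t).

Section Dom.
Variables (T : Type) (py : T -> 'I_n -> 'cV[R]_d).
Local Notation P := (Pd py).
Local Notation r := (rd py).

Lemma Hrd : forall t, P t -> 0 <= r t <= 1.
Proof. by move=> t [_ h]; rewrite /rd h ymax_ge0. Qed.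

Lemma Oy (g : T -> 'I_n) : Okv P r 1 (fun t => py t (g t)).
Proof.
exists 1; split => // t _; rewrite expr1 mul1r; exact: ymax_ge.
Qed.

Lemma Oa1 (g : T -> 'I_n) : Ok P r 2 (fun t => aa (py t) (g t) - 1).
Proof.
exists 1; split => // t Pt; rewrite mul1r; exact: (aa_bound (g t) Pt).2.
Qed.

Lemma Oa0 (g : T -> 'I_n) : Ok P r 0 (fun t => aa (py t) (g t)).
Proof.
exists 1; split => // t Pt; rewrite expr0 mul1r.
have [/andP[h1 h2] _] := aa_bound (g t) Pt.
by rewrite ger0_norm // ltW.
Qed.

Lemma Oxs (g : T -> 'I_n) : Okv P r 0 (fun t => xs (g t)).
Proof. exact: (Okv_fin Hrd xs g). Qed.

Lemma Oxx (g : T -> 'I_n) : Okv P r 0 (fun t => xx (py t) (g t)).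
Proof.
apply: (Okv_scale Hrd (a := 0) (b := 0) (Oa0 g)).
apply: (Okv_add Hrd (Oxs g)).
exact: (Okv_weak Hrd (k' := 1)) (Oy g).
Qed.

End Dom.

Definition T0 := (('I_n -> 'cV[R]_d) * 'I_n)%type.
Definition T1 := (T0 * 'I_n)%type.
Definition P0 := Pd (fun t : T0 => t.1).
Definition r0 := rd (fun t : T0 => t.1).
Definition P1 := Pd (fun t : T1 => t.1.1).
Definition r1 := rd (fun t : T1 => t.1.1).
Definition Hr0 := @Hrd _ (fun t : T0 => t.1).
Definition Hr1 := @Hrd _ (fun t : T1 => t.1.1).

Lemma Z2 : Ok P1 r1 2 (fun t => zz t.1.1 t.1.2 t.2 - zs t.1.2 t.2).
Proof.
pose ai := fun t : T1 => aa t.1.1 t.1.2.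
pose aj := fun t : T1 => aa t.1.1 t.2.
have H : Ok P1 r1 2 (fun t => ((ai t - 1) * aj t + (aj t - 1)) * zs t.1.2 t.2
   + ai t * aj t * dotv (t.1.1 t.1.2) (V *m t.1.1 t.2)).
  apply: (Ok_add Hr1).
    apply: (Ok_mul Hr1 (a := 2) (b := 0)); last first.
      exact: (Ok_fin Hr1 (fun ij : 'I_n * 'I_n => zs ij.1 ij.2) (fun t : T1 => (t.1.2, t.2))).
    apply: (Ok_add Hr1); last exact: Oa1.
    apply: (Ok_mul Hr1 (a := 2) (b := 0)); [exact: Oa1 | exact: Oa0].
  apply: (Ok_mul Hr1 (a := 0) (b := 2)).
    apply: (Ok_mul Hr1 (a := 0) (b := 0)); exact: Oa0.
  apply: (Ok_dot Hr1 (a := 1) (b := 1)); first exact: Oy.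
  apply: (Okv_mulmx Hr1); exact: Oy.
apply: (Ok_ext _ H) => t Pt; rewrite zz_eq //; rewrite /ai /aj; ring.
Qed.

Definition AA y i j := expR (beta * zz y i j).
Definition AS i j := expR (beta * zs i j).
Definition SS y i := \sum_(l < n) AA y i l.
Definition SSs i := \sum_(l < n) AS i l.

Lemma A2 : Ok P1 r1 2 (fun t => AA t.1.1 t.1.2 t.2 - AS t.1.2 t.2).
Proof.
apply: (Ok_exp Hr1).
  exact: (Ok_fin Hr1 (fun ij : 'I_n * 'I_n => beta * zs ij.1 ij.2) (fun t : T1 => (t.1.2, t.2))).
have H := Ok_mul Hr1 (a := 0) (b := 2) (Ok_cst Hr1 beta) Z2.
by apply: (Ok_ext _ H) => t _ /=; rewrite mulrBr.
Qed.

Lemma S2 : Ok P0 r0 2 (fun t => SS t.1 t.2 - SSs t.2).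
Proof.
have H := Ok_sum (P := P0) (r := r0) A2.
by apply: (Ok_ext _ H) => t _ /=; rewrite /SS /SSs sumrB.
Qed.

Lemma zz_bound : exists B, 0 <= B /\ forall t, P1 t -> `|zz t.1.1 t.1.2 t.2| <= B.
Proof.
have H := Ok_add Hr1 (Ok_weak Hr1 (k' := 2) (isT : (0 <= 2)%N) Z2)
  (Ok_fin Hr1 (fun ij : 'I_n * 'I_n => zs ij.1 ij.2) (fun t : T1 => (t.1.2, t.2))).
have H' : Ok P1 r1 0 (fun t : T1 => zz t.1.1 t.1.2 t.2).
  by apply: (Ok_ext _ H) => t _ /=; rewrite subrK.
have [B [B0 hB]] := Ok_bound H'.
by exists B; split.
Qed.

Lemma AA_gt0 y i j : 0 < AA y i j.
Proof. exact: expR_gt0. Qed.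

Lemma SS_lb : exists m0, 0 < m0 /\ forall t, P0 t -> m0 <= SS t.1 t.2.
Proof.
have [B [B0 hB]] := zz_bound.
exists (expR (- (beta * B))); split; first exact: expR_gt0.
move=> [y i] Pt /=.
apply: (@le_trans _ _ (AA y i i)).
  rewrite /AA ler_expR.
  have := hB ((y, i), i) Pt; rewrite /= ler_norml => /andP[h1 h2].
  have hb' := hb. nra.
rewrite /SS (bigD1 i) //= lerDl; apply: sumr_ge0 => l _; exact: ltW (AA_gt0 _ _ _).
Qed.

Lemma Sinv : Ok P0 r0 0 (fun t => (SS t.1 t.2)^-1).
Proof.
have [m0 [m00 hm]] := SS_lb.
apply: (@Ok_intro _ _ _ _ Hr0 0 _ (m0^-1)) => t Pt; rewrite expr0 mulr1.
have hS := hm t Pt.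
have Sp : 0 < SS t.1 t.2 by exact: lt_le_trans hS.
rewrite ger0_norm; last by rewrite invr_ge0 ltW.
by rewrite lef_pV2 ?posrE.
Qed.

Lemma SSs_gt0 i : 0 < SSs i.
Proof.
rewrite /SSs (bigD1 i) //=; apply: ltr_pwDl; first exact: expR_gt0.
by apply: sumr_ge0 => l _; exact: ltW (expR_gt0 _).
Qed.

Lemma Ks_eq i j : Katt beta V xs i j = AS i j / SSs i.
Proof.
rewrite /Katt /AS /SSs zs_eq; congr (_ / _).
by apply: eq_bigr => l _; rewrite zs_eq.
Qed.

Lemma K2 : Ok P1 r1 2 (fun t => Katt beta V (xx t.1.1) t.1.2 t.2 - Katt beta V xs t.1.2 t.2).
Proof.
have S2' := Ok_comp (fun t : T1 => t.1) S2.
have Si' := Ok_comp (fun t : T1 => t.1) Sinv.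
have H : Ok P1 r1 2 (fun t => (AA t.1.1 t.1.2 t.2 - AS t.1.2 t.2) * (SS t.1.1 t.1.2)^-1
   - AS t.1.2 t.2 * (SS t.1.1 t.1.2)^-1 * (SSs t.1.2)^-1 * (SS t.1.1 t.1.2 - SSs t.1.2)).
  apply: (Ok_sub Hr1).
    exact: (Ok_mul Hr1 (a := 2) (b := 0) A2 Si').
  apply: (Ok_mul Hr1 (a := 0) (b := 2)); last exact: S2'.
  apply: (Ok_mul Hr1 (a := 0) (b := 0)); last first.
    exact: (Ok_fin Hr1 (fun i => (SSs i)^-1) (fun t : T1 => t.1.2)).
  apply: (Ok_mul Hr1 (a := 0) (b := 0)); last exact: Si'.
  exact: (Ok_fin Hr1 (fun ij : 'I_n * 'I_n => AS ij.1 ij.2) (fun t : T1 => (t.1.2, t.2))).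
apply: (Ok_ext _ H) => t Pt.
have [m0 [m00 hm]] := SS_lb.
have Sp : 0 < SS t.1.1 t.1.2 by exact: lt_le_trans (hm t.1 Pt).
have Ssp := SSs_gt0 t.1.2.
rewrite Ks_eq /Katt -/(zz _ _ _) -/(AA _ _ _).
have -> : \sum_(l < n) expR (beta * dotv (xx t.1.1 t.1.2) (V *m xx t.1.1 l)) = SS t.1.1 t.1.2 by [].
field; rewrite ?gt_eqF //.
Qed.

Definition KK y i j := Katt beta V (xx y) i j.
Definition Ks i j := Katt beta V xs i j.
Definition cs i := \sum_(j < n) Ks i j * s j.
Definition ww y i := \sum_(j < n) KK y i j *: (V *m xx y j).
Definition WY (y : 'I_n -> 'cV[R]_d) i := \sum_(j < n) Ks i j *: (V *m y j).
Definition w0 (y : 'I_n -> 'cV[R]_d) i := (lam p * cs i) *: e + WY y i.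
Definition XX (y : 'I_n -> 'cV[R]_d) j := (s j * lam p) *: e + V *m y j.

Lemma W2 : Okv P0 r0 2 (fun t => ww t.1 t.2 - w0 t.1 t.2).
Proof.
have H1 : Okv P1 r1 2 (fun t => ((KK t.1.1 t.1.2 t.2 - Ks t.1.2 t.2) * aa t.1.1 t.2
     + Ks t.1.2 t.2 * (aa t.1.1 t.2 - 1)) *: XX t.1.1 t.2).
  apply: (Okv_scale Hr1 (a := 2) (b := 0)).
    apply: (Ok_add Hr1).
      apply: (Ok_mul Hr1 (a := 2) (b := 0)); [exact: K2 | exact: Oa0].
    apply: (Ok_mul Hr1 (a := 0) (b := 2)); last exact: Oa1.
    exact: (Ok_fin Hr1 (fun ij : 'I_n * 'I_n => Ks ij.1 ij.2) (fun t : T1 => (t.1.2, t.2))).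
  apply: (Okv_add Hr1).
    exact: (Okv_fin Hr1 (fun j => (s j * lam p) *: e) (fun t : T1 => t.2)).
  apply: (Okv_weak Hr1 (k' := 1)) => //.
  by apply: (Okv_mulmx Hr1); exact: Oy.
have H := Okv_sum (P := P0) (r := r0) H1.
apply: (Okv_ext _ H) => [[y i]] Pt /=.
have -> : ww y i = \sum_(j < n) KK y i j *: (aa y j *: XX y j).
  by apply: eq_bigr => j _; rewrite Vxx.
rewrite /w0 /WY /cs.
apply/matrixP => k l; rewrite !mxE !summxE.
rewrite big_distrr /= big_distrl /= -big_split /= -sumrB; apply: eq_bigr => j _.
rewrite !mxE /XX /KK; ring.
Qed.

Lemma eWY y i : adm y -> dotv e (WY y i) = 0.
Proof.
move=> h; rewrite /WY dotv_sumr big1 // => j _.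
by rewrite dotvZr eV ey // !mulr0.
Qed.

Lemma D2 : Ok P0 r0 2 (fun t => dotv (xx t.1 t.2) (ww t.1 t.2) - lam p * cs t.2 * s t.2).
Proof.
have H : Ok P0 r0 2 (fun t => (aa t.1 t.2 - 1) * (s t.2 * lam p * cs t.2)
   + aa t.1 t.2 * dotv (t.1 t.2) (WY t.1 t.2)
   + dotv (xx t.1 t.2) (ww t.1 t.2 - w0 t.1 t.2)).
  apply: (Ok_add Hr0); last first.
    exact: (Ok_dot Hr0 (a := 0) (b := 2) (Oxx _ _) W2).
  apply: (Ok_add Hr0).
    apply: (Ok_mul Hr0 (a := 2) (b := 0)); first exact: Oa1.
    exact: (Ok_fin Hr0 (fun i => s i * lam p * cs i) (fun t : T0 => t.2)).
  apply: (Ok_mul Hr0 (a := 0) (b := 2)); first exact: Oa0.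
  apply: (Ok_dot Hr0 (a := 1) (b := 1)); first exact: Oy.
  have H1 : Okv P1 r1 1 (fun t => Ks t.1.2 t.2 *: (V *m t.1.1 t.2)).
    apply: (Okv_scale Hr1 (a := 0) (b := 1)).
      exact: (Ok_fin Hr1 (fun ij : 'I_n * 'I_n => Ks ij.1 ij.2) (fun t : T1 => (t.1.2, t.2))).
    by apply: (Okv_mulmx Hr1); exact: Oy.
  exact: (Okv_sum (P := P0) (r := r0) H1).
apply: (Ok_ext _ H) => [[y i]] Pt /=.
rewrite dotvBr.
have -> : dotv (xx y i) (w0 y i) = aa y i * (s i * lam p * cs i + dotv (y i) (WY y i)).
  rewrite /xx /normalize -/(aa y i) /w0 /xs.
  rewrite !(dotvDl, dotvDr, dotvZl, dotvZr) ee eWY // ye //; ring.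
ring.
Qed.

Lemma F2 : Okv P0 r0 2 (fun t => Fvec beta V (xx t.1) t.2
   - (- (lam p * s t.2 * \sum_(j < n) Ks t.2 j * s j) *: t.1 t.2 + WY t.1 t.2)).
Proof.
have H : Okv P0 r0 2 (fun t => (ww t.1 t.2 - w0 t.1 t.2)
   - ((aa t.1 t.2 - 1) * (lam p * cs t.2 * s t.2)) *: (xs t.2 + t.1 t.2)
   - (dotv (xx t.1 t.2) (ww t.1 t.2) - lam p * cs t.2 * s t.2) *: xx t.1 t.2).
  apply: (Okv_sub Hr0); last exact: (Okv_scale Hr0 (a := 2) (b := 0) D2 (Oxx _ _)).
  apply: (Okv_sub Hr0); first exact: W2.
  apply: (Okv_scale Hr0 (a := 2) (b := 0)).
    apply: (Ok_mul Hr0 (a := 2) (b := 0)); first exact: Oa1.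
    exact: (Ok_fin Hr0 (fun i => lam p * cs i * s i) (fun t : T0 => t.2)).
  apply: (Okv_add Hr0); first exact: Oxs.
  by apply: (Okv_weak Hr0 (k' := 1)) => //; exact: Oy.
apply: (Okv_ext _ H) => [[y i]] Pt /=.
rewrite /Fvec /Pperp -/(ww y i) -/(cs i) /w0.
set D := dotv (xx y i) (ww y i).
rewrite /xx /normalize -/(aa y i) /xs.
apply/matrixP => k l; rewrite !mxE.
by case: (hs i) => ->; ring.
Qed.

End Main.

Unset Implicit Arguments. Set Strict Implicit.

Theorem lemmaA1 (R : realType) (d n : nat) (beta : R) (V : 'M[R]_d)
  (E : 'M[R]_d) (lam : 'I_d -> R) (p : 'I_d) (s : 'I_n -> R) :
  0 < beta ->
  V^T = V ->
  E^T *m E = 1%:M ->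
  (forall k : 'I_d, V *m col k E = lam k *: col k E) ->
  (forall i, s i = 1 \/ s i = -1) ->
  let xs := fun i : 'I_n => s i *: col p E in
  let Ks := Katt beta V xs in
  let gam := fun i : 'I_n => lam p * s i * \sum_(j < n) Ks i j * s j in
  exists C delta : R, 0 < delta /\
    forall y : 'I_n -> 'cV[R]_d,
      (forall i, dotv (y i) (xs i) = 0) ->
      ymax y <= delta ->
      forall i : 'I_n,
        vnorm (Fvec beta V (fun m => normalize (xs m + y m)) i
               - (- gam i *: y i + \sum_(j < n) Ks i j *: (V *m y j)))
        <= C * ymax y ^+ 2.
Proof.
move=> hb hV hE heig hs xs0 Ks0 gam.
have [c [c0 hc]] := F2 p hV hE heig hs hb.
exists c, 1; split => // y hy hy1 i.
have Pt : P0 E p s (y, i) by split.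
exact: (hc (y, i) Pt).
Qed.
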